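(* In the finite-sum strongly monotone setting below, for any $0<\alpha\le\mu/(5nl^2)$ and $K\ge1$, the GDA iterates satisfy $$\max_{\tau_1,\dots,\tau_K\in\mathbb{S}_n}\|\mathbf{z}^{K+1}_0-\mathbf{z}^*\|^2\le 2e^{-n\alpha\mu K}\|\mathbf{z}_0-\mathbf{z}^*\|^2+\frac{3l^2\sigma_*^2\alpha^3n^3K}{\mu}.$$ Moreover, if $\|\nu(\mathbf{z}_0)\|K/\mu>1$ and $\alpha=\min\{\mu/(5nl^2),\,2\log(\|\nu(\mathbf{z}_0)\|K/\mu)/(\mu nK)\}$, then $$\max_{\tau_1,\dots,\tau_K\in\mathbb{S}_n}\|\mathbf{z}^{K+1}_0-\mathbf{z}^*\|^2\le 2e^{-K/(5\kappa^2)}\|\mathbf{z}_0-\mathbf{z}^*\|^2+\frac{2\mu^2+24\kappa^2\sigma_*^2\log^3(\|\nu(\mathbf{z}_0)\|K/\mu)}{\mu^2K^2}.$$ In particular this applies to the incremental gradient method ($\tau_k=\mathrm{id}$ for all $k$).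
   Context: Setting: $n\ge1$; $\omega_1,\dots,\omega_n:\mathbb{R}^d\to\mathbb{R}^d$ are each $l$-Lipschitz (not necessarily monotone), and $\nu=\frac1n\sum_{i=1}^n\omega_i$ is $\mu$-strongly monotone ($\langle\nu(\mathbf{z}_1)-\nu(\mathbf{z}_2),\mathbf{z}_1-\mathbf{z}_2\rangle\ge\mu\|\mathbf{z}_1-\mathbf{z}_2\|^2$), with unique root $\mathbf{z}^*$. $\kappa=l/\mu$ and $\sigma_*^2=\frac1n\sum_{i=1}^n\|\omega_i(\mathbf{z}^* )\|^2$. $\mathbb{S}_n$ is the set of permutations of $[n]$. GDA with permutations $\tau_1,\dots,\tau_K$: $\mathbf{z}^1_0=\mathbf{z}_0$; in epoch $k$, $\mathbf{z}^k_i=\mathbf{z}^k_{i-1}-\alpha\,\omega_{\tau_k(i)}(\mathbf{z}^k_{i-1})$ for $i=1,\dots,n$, and $\mathbf{z}^{k+1}_0=\mathbf{z}^k_n$. The maximum is over all sequences of permutations (adversarial shuffling). *)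

(* Defs.v *)
From HB Require Import structures.
From mathcomp Require Import all_boot all_order all_algebra.
From mathcomp Require Import fingroup perm.
From mathcomp Require Import all_classical all_reals all_analysis.
Set Implicit Arguments. Unset Strict Implicit. Unset Printing Implicit Defensive.
Import Order.TTheory GRing.Theory Num.Theory.
Local Open Scope ring_scope.

Section GDA.
Variable R : realType.
Variable d : nat.

Definition gda_dot (u v : 'rV[R]_d) : R := \sum_(j < d) u 0 j * v 0 j.
Definition gda_sqnorm (u : 'rV[R]_d) : R := gda_dot u u.
Definition gda_norm (u : 'rV[R]_d) : R := Num.sqrt (gda_sqnorm u).

Definition gda_lipschitz (l : R) (f : 'rV[R]_d -> 'rV[R]_d) : Prop :=
  forall x y, gda_norm (f x - f y) <= l * gda_norm (x - y).

Definition gda_strongly_monotone (mu : R) (f : 'rV[R]_d -> 'rV[R]_d) : Prop :=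
  forall x y, gda_dot (f x - f y) (x - y) >= mu * gda_sqnorm (x - y).

Variable n : nat.
Variable omega : 'I_n -> 'rV[R]_d -> 'rV[R]_d.

Definition gda_nu (z : 'rV[R]_d) : 'rV[R]_d := (n%:R)^-1 *: \sum_(i < n) omega i z.

Definition gda_sigma2 (zs : 'rV[R]_d) : R := (n%:R)^-1 * \sum_(i < n) gda_sqnorm (omega i zs).

(* One gda_epoch: z_i = z_{i-1} - alpha * omega_{tau(i)}(z_{i-1}), i = 1..n
   (indices 0..n-1 here, in increasing order). *)
Definition gda_epoch (alpha : R) (tau : 'S_n) (z : 'rV[R]_d) : 'rV[R]_d :=
  foldl (fun w (i : 'I_n) => w - alpha *: omega (tau i) w) z (enum 'I_n).

(* gda alpha taus k z0 = z^{k+1}_0, using permutations taus 0, ..., taus (k-1)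
   (taus (k-1) plays the role of tau_k). *)
Fixpoint gda (alpha : R) (taus : nat -> 'S_n) (k : nat) (z0 : 'rV[R]_d) : 'rV[R]_d :=
  match k with
  | 0 => z0
  | k'.+1 => gda_epoch alpha (taus k') (gda alpha taus k' z0)
  end.

End GDA.

(* Main.v *)
Require Import Defs.
From HB Require Import structures.
From mathcomp Require Import all_boot all_order all_algebra.
From mathcomp Require Import fingroup perm.
From mathcomp Require Import all_classical all_reals all_analysis.
From mathcomp Require Import ring lra.
Import Order.TTheory GRing.Theory Num.Theory.
Local Open Scope ring_scope.

Lemma dotC {R : realType} {d : nat} (u v : 'rV[R]_d) : gda_dot u v = gda_dot v u.
Proof. by apply: eq_bigr => j _; rewrite mulrC. Qed.

Lemma dotDl {R : realType} {d : nat} (u v w : 'rV[R]_d) :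
  gda_dot (u + v) w = gda_dot u w + gda_dot v w.
Proof. by rewrite /gda_dot -big_split; apply: eq_bigr => j _; rewrite !mxE mulrDl. Qed.

Lemma dotZl {R : realType} {d : nat} (a : R) (u w : 'rV[R]_d) :
  gda_dot (a *: u) w = a * gda_dot u w.
Proof. by rewrite /gda_dot mulr_sumr; apply: eq_bigr => j _; rewrite !mxE mulrA. Qed.

Lemma dotNl {R : realType} {d : nat} (u w : 'rV[R]_d) :
  gda_dot (- u) w = - gda_dot u w.
Proof. by rewrite -scaleN1r dotZl mulN1r. Qed.

Lemma dotBl {R : realType} {d : nat} (u v w : 'rV[R]_d) :
  gda_dot (u - v) w = gda_dot u w - gda_dot v w.
Proof. by rewrite dotDl dotNl. Qed.

Lemma dotDr {R : realType} {d : nat} (u v w : 'rV[R]_d) :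
  gda_dot w (u + v) = gda_dot w u + gda_dot w v.
Proof. by rewrite dotC dotDl !(dotC w). Qed.

Lemma dotZr {R : realType} {d : nat} (a : R) (u w : 'rV[R]_d) :
  gda_dot w (a *: u) = a * gda_dot w u.
Proof. by rewrite dotC dotZl dotC. Qed.

Lemma dotNr {R : realType} {d : nat} (u w : 'rV[R]_d) :
  gda_dot w (- u) = - gda_dot w u.
Proof. by rewrite dotC dotNl dotC. Qed.

Lemma dotBr {R : realType} {d : nat} (u v w : 'rV[R]_d) :
  gda_dot w (u - v) = gda_dot w u - gda_dot w v.
Proof. by rewrite dotDr dotNr. Qed.

Lemma dot_suml {R : realType} {d : nat} m (F : 'I_m -> 'rV[R]_d) (w : 'rV[R]_d) :
  gda_dot (\sum_(i < m) F i) w = \sum_(i < m) gda_dot (F i) w.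
Proof.
elim: m F => [|m IH] F; first by rewrite !big_ord0 /gda_dot big1 // => j _; rewrite mxE mul0r.
by rewrite !big_ord_recr /= dotDl IH.
Qed.

Lemma sq_ge0 {R : realType} {d : nat} (u : 'rV[R]_d) : 0 <= gda_sqnorm u.
Proof. by rewrite /gda_sqnorm /gda_dot sumr_ge0 // => j _; rewrite -expr2 sqr_ge0. Qed.

Lemma sqD {R : realType} {d : nat} (u v : 'rV[R]_d) :
  gda_sqnorm (u + v) = gda_sqnorm u + 2 * gda_dot u v + gda_sqnorm v.
Proof. rewrite /gda_sqnorm !dotDl !dotDr (dotC v u); ring. Qed.

Lemma sqN {R : realType} {d : nat} (u : 'rV[R]_d) : gda_sqnorm (- u) = gda_sqnorm u.
Proof. by rewrite /gda_sqnorm dotNl dotNr opprK. Qed.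

Lemma sqZ {R : realType} {d : nat} (a : R) (u : 'rV[R]_d) :
  gda_sqnorm (a *: u) = a ^+ 2 * gda_sqnorm u.
Proof. by rewrite /gda_sqnorm dotZl dotZr mulrA expr2. Qed.

Lemma young {R : realType} {d : nat} (u v : 'rV[R]_d) :
  2 * gda_dot u v <= gda_sqnorm u + gda_sqnorm v.
Proof.
have := sq_ge0 (u - v); rewrite sqD sqN dotNr; lra.
Qed.

Lemma sqD2 {R : realType} {d : nat} (u v : 'rV[R]_d) :
  gda_sqnorm (u + v) <= 2 * gda_sqnorm u + 2 * gda_sqnorm v.
Proof. rewrite sqD; have := young u v; lra. Qed.

Lemma youngc {R : realType} {d : nat} (c : R) (u v : 'rV[R]_d) : 0 < c ->
  2 * gda_dot u v <= c * gda_sqnorm u + c^-1 * gda_sqnorm v.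
Proof.
move=> c0; have := young (c *: u) v; rewrite dotZl sqZ => H.
have Hc : 2 * gda_dot u v = c^-1 * (2 * (c * gda_dot u v)) by field; lra.
rewrite Hc; have -> : c * gda_sqnorm u = c^-1 * (c ^+ 2 * gda_sqnorm u) by field; lra.
rewrite -mulrDr; apply: ler_wpM2l; first by rewrite invr_ge0 ltW.
lra.
Qed.

Lemma sqDc {R : realType} {d : nat} (c : R) (u v : 'rV[R]_d) : 0 < c ->
  gda_sqnorm (u + v) <= (1 + c) * gda_sqnorm u + (1 + c^-1) * gda_sqnorm v.
Proof. move=> c0; rewrite sqD; have := youngc c u v c0; lra. Qed.

Lemma sq_sum {R : realType} {d : nat} m (F : 'I_m -> 'rV[R]_d) :
  gda_sqnorm (\sum_(i < m) F i) <= m%:R * \sum_(i < m) gda_sqnorm (F i).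
Proof.
elim: m F => [|m IH] F; first by rewrite !big_ord0 mul0r /gda_sqnorm /gda_dot big1 // => j _; rewrite mxE mul0r.
rewrite !big_ord_recr /= sqD.
set S := \sum_(i < m) F (widen_ord (leqnSn m) i).
have H1 := IH (fun i => F (widen_ord (leqnSn m) i)).
have H2 : 2 * gda_dot S (F ord_max) <= \sum_(i < m) gda_sqnorm (F (widen_ord (leqnSn m) i)) + m%:R * gda_sqnorm (F ord_max).
  have -> : m%:R * gda_sqnorm (F ord_max) = \sum_(i < m) gda_sqnorm (F ord_max)
    by rewrite sumr_const card_ord mulr_natl.
  rewrite /S dot_suml mulr_sumr -big_split /=; apply: ler_sum => i _.
  exact: young.
rewrite -/S in H1 *; rewrite mulrSr; have := sq_ge0 (F ord_max); nra.
Qed.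

Lemma lip2 {R : realType} {d : nat} (l : R) (f : 'rV[R]_d -> 'rV[R]_d) x y :
  gda_lipschitz l f -> gda_sqnorm (f x - f y) <= l ^+ 2 * gda_sqnorm (x - y).
Proof.
move=> /(_ x y) H; rewrite /gda_norm in H.
rewrite -(sqr_sqrtr (sq_ge0 (f x - f y))) -(sqr_sqrtr (sq_ge0 (x - y))).
rewrite -exprMn !expr2; apply: ler_pM => //; exact: sqrtr_ge0.
Qed.

Fixpoint zseq {R : realType} {d : nat} (alpha : R) (h : nat -> 'rV[R]_d -> 'rV[R]_d)
  (z : 'rV[R]_d) (i : nat) : 'rV[R]_d :=
  match i with
  | 0 => z
  | i'.+1 => zseq alpha h z i' - alpha *: h i' (zseq alpha h z i')
  end.

Lemma zseq_sum {R : realType} {d : nat} (alpha : R) h (z : 'rV[R]_d) i :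
  zseq alpha h z i - z = - (alpha *: \sum_(j < i) h j (zseq alpha h z j)).
Proof.
elim: i => [|i IH]; first by rewrite big_ord0 scaler0 oppr0 subrr.
rewrite big_ord_recr /= scalerDr opprD -IH; by rewrite addrAC.
Qed.

Lemma sum_le_widen {R : realType} (f : nat -> R) i m : (i <= m)%N ->
  (forall j, 0 <= f j) -> \sum_(j < i) f j <= \sum_(j < m) f j.
Proof.
move=> im f0; rewrite -!(big_mkord xpredT) /=.
rewrite (big_cat_nat _ im) //= lerDl; exact: sumr_ge0.
Qed.

Lemma zseq_drift {R : realType} {d : nat} (alpha : R) h (z : 'rV[R]_d) i m : (i <= m)%N ->
  gda_sqnorm (zseq alpha h z i - z)
  <= alpha ^+ 2 * i%:R * \sum_(j < m) gda_sqnorm (h j (zseq alpha h z j)).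
Proof.
move=> im; rewrite zseq_sum sqN sqZ -mulrA; apply: ler_wpM2l; first exact: sqr_ge0.
apply: le_trans; first exact: sq_sum. apply: ler_wpM2l; first exact: ler0n.
apply: (sum_le_widen (fun j => gda_sqnorm (h j (zseq alpha h z j)))) => // j.
exact: sq_ge0.
Qed.

Lemma sum_nat_le {R : realType} m : 2 * \sum_(i < m) (i%:R : R) <= m%:R ^+ 2.
Proof.
elim: m => [|m IH]; first by rewrite big_ord0 mulr0 expr0n.
rewrite big_ord_recr /= mulrDr -natr1; lra.
Qed.

Lemma drift_total {R : realType} {d : nat} (alpha : R) h (z : 'rV[R]_d) m :
  \sum_(i < m) gda_sqnorm (zseq alpha h z i - z)
  <= alpha ^+ 2 * m%:R ^+ 2 / 2 * \sum_(j < m) gda_sqnorm (h j (zseq alpha h z j)).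
Proof.
set G := \sum_(j < m) gda_sqnorm (h j (zseq alpha h z j)).
apply: (@le_trans _ _ (\sum_(i < m) alpha ^+ 2 * (i:nat)%:R * G)).
  apply: ler_sum => i _; exact: (zseq_drift alpha h z i m (ltnW (ltn_ord i))).
rewrite -mulr_suml -mulr_sumr.
have G0 : 0 <= G by rewrite sumr_ge0 // => j _; exact: sq_ge0.
have := @sum_nat_le R m; set T := \sum_(i < m) _ => HT.
have a0 : 0 <= alpha ^+ 2 by exact: sqr_ge0.
have aG := mulr_ge0 a0 G0.
have : 0 <= alpha ^+ 2 * G * (m%:R ^+ 2 - 2 * T) by apply: mulr_ge0 => //; lra.
nra.
Qed.

Lemma G_bound {R : realType} {d : nat} (alpha l : R) (h : nat -> 'rV[R]_d -> 'rV[R]_d) (z zs : 'rV[R]_d) m :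
  (forall j x y, gda_sqnorm (h j x - h j y) <= l ^+ 2 * gda_sqnorm (x - y)) ->
  \sum_(j < m) gda_sqnorm (h j (zseq alpha h z j))
  <= 2 * \sum_(j < m) gda_sqnorm (h j zs) + 4 * l ^+ 2 * m%:R * gda_sqnorm (z - zs)
     + 4 * l ^+ 2 * \sum_(j < m) gda_sqnorm (zseq alpha h z j - z).
Proof.
move=> hl.
have l0 : 0 <= l ^+ 2 by exact: sqr_ge0.
set W := gda_sqnorm (z - zs).
have key : forall j : 'I_m, gda_sqnorm (h j (zseq alpha h z j)) <=
   2 * gda_sqnorm (h j zs) + 4 * l ^+ 2 * W + 4 * l ^+ 2 * gda_sqnorm (zseq alpha h z j - z).
  move=> j.
  have e1 : h j (zseq alpha h z j) = h j zs + (h j (zseq alpha h z j) - h j zs).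
    by rewrite addrC subrK.
  have e2 : zseq alpha h z j - zs = (zseq alpha h z j - z) + (z - zs).
    by rewrite addrA subrK.
  rewrite {1}e1; apply: le_trans (sqD2 _ _) _.
  have H1 := hl j (zseq alpha h z j) zs; rewrite e2 in H1.
  have H2 := sqD2 (zseq alpha h z j - z) (z - zs).
  have H3 : l ^+ 2 * gda_sqnorm (zseq alpha h z j - z + (z - zs)) <=
            l ^+ 2 * (2 * gda_sqnorm (zseq alpha h z j - z) + 2 * W).
    exact: ler_wpM2l.
  lra.
move: key; move: W => W key.
apply: le_trans (ler_sum _ (fun j _ => key j)) _.
rewrite !big_split /= -!mulr_sumr sumr_const card_ord mulr_natr.
rewrite -mulr_natl; lra.
Qed.

Lemma e_bound {R : realType} {d : nat} (alpha l : R) (h : nat -> 'rV[R]_d -> 'rV[R]_d) (z : 'rV[R]_d) m :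
  (forall j x y, gda_sqnorm (h j x - h j y) <= l ^+ 2 * gda_sqnorm (x - y)) ->
  gda_sqnorm (\sum_(j < m) (h j (zseq alpha h z j) - h j z))
  <= m%:R * (l ^+ 2 * \sum_(j < m) gda_sqnorm (zseq alpha h z j - z)).
Proof.
move=> hl; apply: le_trans; first exact: sq_sum.
apply: ler_wpM2l; first exact: ler0n.
rewrite mulr_sumr; apply: ler_sum => j _; exact: hl.
Qed.

Lemma zseq_final {R : realType} {d : nat} (alpha : R) (h : nat -> 'rV[R]_d -> 'rV[R]_d) (z zs : 'rV[R]_d) m :
  zseq alpha h z m - zs = (z - alpha *: \sum_(j < m) h j z - zs)
     - alpha *: \sum_(j < m) (h j (zseq alpha h z j) - h j z).
Proof.
have := zseq_sum alpha h z m => /eqP; rewrite subr_eq => /eqP ->.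
rewrite sumrB scalerBr.
move: (alpha *: _) (alpha *: _) => a b.
by rewrite opprB [- b + z]addrC addrAC [z - a - zs]addrAC -[RHS]addrA addKr.
Qed.

Lemma alg_epoch {R : realType} (nR alpha mu L W S Q U E T sig : R) :
  0 < nR -> 0 < alpha -> 0 < mu -> 0 < L -> 5 * nR * L * alpha <= mu -> mu ^+ 2 <= L ->
  0 <= W -> 0 <= S -> 0 <= Q -> 0 <= U -> 0 <= E -> Q = nR * sig ->
  U <= W - 2 * (nR * alpha) * mu * W + (nR * alpha) ^+ 2 * L * W ->
  S <= alpha ^+ 2 * nR ^+ 2 / 2 * (2 * Q + 4 * L * nR * W + 4 * L * S) ->
  E <= nR * (L * S) ->
  T <= (1 + nR * alpha * mu / 2) * U + (1 + (nR * alpha * mu / 2)^-1) * (alpha ^+ 2 * E) ->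
  T <= (1 - nR * alpha * mu) * W + 3 * L * sig * alpha ^+ 3 * nR ^+ 3 / mu.
Proof.
move=> n0 a0 m0 L0 hal hmu W0 S0 Q0 U0 E0 hQ hU hS hE hT.
set p := nR * alpha.
have p0 : 0 < p by rewrite /p mulr_gt0.
set x := p * mu.
have x0 : 0 < x by rewrite /x mulr_gt0.
set b := p ^+ 2 * L.
have b0 : 0 <= b by rewrite /b mulr_ge0 // ?sqr_ge0 // ltW.
have hb : 5 * b <= x.
  have : 5 * nR * L * alpha * p <= mu * p by rewrite ler_wpM2r // ltW.
  rewrite /b /x /p; nra.
have hx : 5 * x <= 1.
  have h1 : p * mu ^+ 2 <= p * L by rewrite ler_wpM2l // ltW.
  have h2 : 5 * p * L <= mu by rewrite /p; nra.
  have : 5 * x * mu <= mu by rewrite /x; nra.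
  nra.
have hS2 : S * (1 - 2 * b) <= p ^+ 2 * Q + 2 * p ^+ 2 * L * nR * W.
  move: hS; rewrite /b /p; set A := alpha ^+ 2 * nR ^+ 2 / 2.
  have -> : A = (nR * alpha) ^+ 2 / 2 by rewrite /A; ring.
  nra.
set Y := alpha ^+ 2 * E.
have hY : Y * nR <= b * S.
  rewrite /Y /b /p.
  have : alpha ^+ 2 * E <= alpha ^+ 2 * (nR * (L * S)) by rewrite ler_wpM2l // sqr_ge0.
  move=> H; have := ler_wpM2r (ltW n0) H; move=> H2.
  apply: le_trans H2 _; rewrite le_eqVlt; apply/orP; left; apply/eqP; ring.
set Nq := b * p ^+ 2 * Q / nR.
have Nq0 : 0 <= Nq by rewrite /Nq divr_ge0 ?(ltW n0) // mulr_ge0 // mulr_ge0 // sqr_ge0.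
have hY2 : Y * (1 - 2 * b) <= Nq + 2 * b ^+ 2 * W.
  have D0 : 0 <= 1 - 2 * b by lra.
  have H1 : Y * nR * (1 - 2 * b) <= b * S * (1 - 2 * b) by rewrite ler_wpM2r.
  have H2 : b * (S * (1 - 2 * b)) <= b * (p ^+ 2 * Q + 2 * p ^+ 2 * L * nR * W) by rewrite ler_wpM2l.
  have H3 : Y * (1 - 2 * b) * nR <= (Nq + 2 * b ^+ 2 * W) * nR.
    have -> : (Nq + 2 * b ^+ 2 * W) * nR = b * (p ^+ 2 * Q + 2 * p ^+ 2 * L * nR * W).
      rewrite /Nq /b; field; lra.
    lra.
  by rewrite ler_pM2r in H3.
have hNt : 3 * L * sig * alpha ^+ 3 * nR ^+ 3 / mu * x = 3 * Nq.
  by rewrite /Nq /b /x /p hQ; field; rewrite (gt_eqF n0) (gt_eqF m0).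
have Y0 : 0 <= Y by rewrite /Y mulr_ge0 // sqr_ge0.
have hc : (nR * alpha * mu / 2)^-1 = 2 / x by rewrite /x /p invf_div.
rewrite hc -/p -/x in hT.
rewrite -/p -/x.
set Nt := 3 * L * sig * alpha ^+ 3 * nR ^+ 3 / mu in hNt *.
suff : T * x <= ((1 - x) * W + Nt) * x by rewrite ler_pM2r.
have hT2 : T * x <= x * (1 + x / 2) * U + (x + 2) * Y.
  have := ler_wpM2r (ltW x0) hT; move=> H; apply: le_trans H _.
  rewrite le_eqVlt; apply/orP; left; apply/eqP; rewrite /Y; field; lra.
have hU2 : U <= (1 - 9 / 5 * x) * W.
  have : b * W <= x / 5 * W by apply: ler_wpM2r => //; lra.
  have e1 : W - 2 * (nR * alpha) * mu * W + (nR * alpha) ^+ 2 * L * W = W - 2 * x * W + b * W.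
    by rewrite /x /b /p; ring.
  rewrite e1 in hU; lra.
have hxU : x * (1 + x / 2) * U <= x * (1 + x / 2) * ((1 - 9 / 5 * x) * W).
  by apply: ler_wpM2l => //; apply: mulr_ge0; lra.
have D1 : 0 < 1 - 2 * b by lra.
suff : (x * (1 + x / 2) * ((1 - 9 / 5 * x) * W) + (x + 2) * Y) * (1 - 2 * b)
        <= ((1 - x) * W + Nt) * x * (1 - 2 * b).
  by rewrite ler_pM2r //; lra.
have hb2 : b ^+ 2 <= x ^+ 2 / 25 by nra.
have HY : (x + 2) * (Y * (1 - 2 * b)) <= (x + 2) * (Nq + 2 * b ^+ 2 * W) by rewrite ler_wpM2l //; lra.
have eR : ((1 - x) * W + Nt) * x * (1 - 2 * b) = (1 - x) * W * x * (1 - 2 * b) + 3 * Nq * (1 - 2 * b).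
  by rewrite -hNt; ring.
rewrite eR.
have HW1 : 2 * b ^+ 2 * (x + 2) <= 2 * (x ^+ 2 / 25) * (x + 2).
  apply: ler_wpM2r; first lra. lra.
have HW2 : x ^+ 2 * (23 / 25) * (3 / 10 + 9 / 10 * x) <= x ^+ 2 * (1 - 2 * b) * (3 / 10 + 9 / 10 * x).
  apply: ler_wpM2r; first lra. apply: ler_wpM2l; first exact: sqr_ge0. lra.
have HW3 : 2 * (x ^+ 2 / 25) * (x + 2) <= x ^+ 2 * (23 / 25) * (3 / 10 + 9 / 10 * x).
  have : 0 <= x ^+ 2 by exact: sqr_ge0. nra.
have HW : 2 * b ^+ 2 * (x + 2) * W <= x ^+ 2 * (1 - 2 * b) * (3 / 10 + 9 / 10 * x) * W.
  apply: ler_wpM2r => //. lra.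
have Hq : (x + 2) * Nq <= 3 * (1 - 2 * b) * Nq.
  apply: ler_wpM2r => //. lra.
nra.
Qed.

Lemma nu_lip {R : realType} {d n : nat} (omega : 'I_n -> 'rV[R]_d -> 'rV[R]_d) (l : R) x y :
  (0 < n)%N -> (forall i, gda_lipschitz l (omega i)) ->
  gda_sqnorm (gda_nu omega x - gda_nu omega y) <= l ^+ 2 * gda_sqnorm (x - y).
Proof.
move=> n0 hl.
have -> : gda_nu omega x - gda_nu omega y = (n%:R)^-1 *: \sum_(i < n) (omega i x - omega i y).
  by rewrite /gda_nu -scalerBr -sumrB.
rewrite sqZ.
have H1 := @sq_sum _ _ n (fun i => omega i x - omega i y).
have H2 : \sum_(i < n) gda_sqnorm (omega i x - omega i y) <= \sum_(i < n) l ^+ 2 * gda_sqnorm (x - y).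
  by apply: ler_sum => i _; exact: lip2.
rewrite sumr_const card_ord -mulr_natl in H2.
have nR0 : 0 < (n%:R : R) by rewrite ltr0n.
have H3 : gda_sqnorm (\sum_(i < n) (omega i x - omega i y)) <= n%:R * (n%:R * (l ^+ 2 * gda_sqnorm (x - y))).
  apply: le_trans H1 _; apply: ler_wpM2l; first exact: ltW.
  exact: H2.
have Hi : 0 <= (n%:R : R)^-1 ^+ 2 by exact: sqr_ge0.
apply: le_trans (ler_wpM2l Hi H3) _.
rewrite le_eqVlt; apply/orP; left; apply/eqP; field.
by rewrite gt_eqF.
Qed.

Lemma mono_young {R : realType} {d : nat} (mu : R) (a v : 'rV[R]_d) :
  0 < mu -> mu * gda_sqnorm v <= gda_dot a v -> mu ^+ 2 * gda_sqnorm v <= gda_sqnorm a.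
Proof.
move=> m0 H.
have t0 : 0 < mu^-1 by rewrite invr_gt0.
have := youngc (mu^-1) a v t0; rewrite invrK => H2.
have H3 : mu * gda_sqnorm v <= mu^-1 * gda_sqnorm a by lra.
have := ler_wpM2l (ltW m0) H3.
have -> : mu * (mu^-1 * gda_sqnorm a) = gda_sqnorm a by rewrite mulrA mulfV ?gt_eqF // mul1r.
by rewrite mulrA expr2.
Qed.

Lemma mu_le_l {R : realType} {d n : nat} (omega : 'I_n -> 'rV[R]_d -> 'rV[R]_d) (l mu : R) :
  (0 < d)%N -> (0 < n)%N -> 0 < mu -> (forall i, gda_lipschitz l (omega i)) ->
  gda_strongly_monotone mu (gda_nu omega) -> mu ^+ 2 <= l ^+ 2.
Proof.
move=> d0 n0 m0 hl hm.
set v : 'rV[R]_d := const_mx 1.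
have hv : gda_sqnorm v = d%:R.
  rewrite /gda_sqnorm /gda_dot (eq_bigr (fun _ => 1)); last by move=> j _; rewrite mxE mulr1.
  by rewrite sumr_const card_ord.
have v0 : 0 < gda_sqnorm v by rewrite hv ltr0n.
have H := @mono_young _ _ mu _ _ m0 (hm v 0).
have H2 := nu_lip omega l v 0 n0 hl.
have H3 : mu ^+ 2 * gda_sqnorm v <= l ^+ 2 * gda_sqnorm v by rewrite subr0 in H H2; lra.
by rewrite ler_pM2r in H3.
Qed.

Lemma zseq_ext {R : realType} {d : nat} (alpha : R) (h h' : nat -> 'rV[R]_d -> 'rV[R]_d) z i :
  (forall j, (j < i)%N -> h j = h' j) -> zseq alpha h z i = zseq alpha h' z i.
Proof.
elim: i => [//|i IH] H /=.
rewrite IH; last by move=> j ji; apply: H; exact: ltnW.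
by rewrite H.
Qed.

Lemma foldl_zseq {R : realType} {d n : nat} (omega : 'I_n -> 'rV[R]_d -> 'rV[R]_d) alpha (tau : 'S_n) x0 z (s : seq 'I_n) :
  foldl (fun w (i : 'I_n) => w - alpha *: omega (tau i) w) z s
  = zseq alpha (fun j => omega (tau (nth x0 s j))) z (size s).
Proof.
elim/last_ind: s => [//|s x IH].
rewrite foldl_rcons IH size_rcons /=.
rewrite nth_rcons ltnn eqxx.
rewrite (@zseq_ext _ _ alpha (fun j => omega (tau (nth x0 (rcons s x) j))) (fun j => omega (tau (nth x0 s j)))) //.
by move=> j js; rewrite nth_rcons js.
Qed.

Lemma epoch_bound {R : realType} {d n : nat} (omega : 'I_n -> 'rV[R]_d -> 'rV[R]_d)
  (l mu alpha : R) (zs z : 'rV[R]_d) (tau : 'S_n) :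
  (0 < n)%N -> 0 < mu -> (forall i, gda_lipschitz l (omega i)) ->
  gda_strongly_monotone mu (gda_nu omega) -> gda_nu omega zs = 0 ->
  0 < alpha -> 5 * n%:R * l ^+ 2 * alpha <= mu -> mu ^+ 2 <= l ^+ 2 ->
  gda_sqnorm (gda_epoch omega alpha tau z - zs)
  <= (1 - n%:R * alpha * mu) * gda_sqnorm (z - zs)
     + 3 * l ^+ 2 * gda_sigma2 omega zs * alpha ^+ 3 * n%:R ^+ 3 / mu.
Proof.
move=> n0 m0 hl hm hz a0 hal hmu.
pose x0 : 'I_n := Ordinal n0.
pose h := fun j => omega (tau (nth x0 (enum 'I_n) j)).
have Ep : gda_epoch omega alpha tau z = zseq alpha h z n.
  by rewrite /gda_epoch (foldl_zseq _ _ _ x0) size_enum_ord.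
have hlip : forall j x y, gda_sqnorm (h j x - h j y) <= l ^+ 2 * gda_sqnorm (x - y).
  by move=> j x y; apply: lip2; exact: hl.
have hsumv : forall w, \sum_(j < n) h j w = \sum_(i < n) omega i w.
  move=> w; rewrite /h (eq_bigr (fun j => omega (tau j) w)); last by move=> j _; rewrite nth_ord_enum.
  by rewrite [RHS](reindex_inj (@perm_inj _ tau)).
have hsumr : \sum_(j < n) gda_sqnorm (h j zs) = \sum_(i < n) gda_sqnorm (omega i zs).
  rewrite /h (eq_bigr (fun j => gda_sqnorm (omega (tau j) zs))); last by move=> j _; rewrite nth_ord_enum.
  by rewrite [RHS](reindex_inj (@perm_inj _ tau)).
have nR0 : 0 < (n%:R : R) by rewrite ltr0n.
rewrite Ep zseq_final hsumv.
set g := gda_nu omega z.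
have hg : \sum_(i < n) omega i z = n%:R *: g.
  by rewrite /g /gda_nu scalerA mulfV ?gt_eqF // scale1r.
rewrite hg.
set W := gda_sqnorm (z - zs).
set e := \sum_(j < n) _.
set p := n%:R * alpha.
have eu : z - alpha *: (n%:R *: g) - zs = (z - zs) + (- p) *: g.
  by rewrite scalerA scaleNr (mulrC alpha) addrAC.
rewrite eu.
set u := (z - zs) + (- p) *: g.
have Hgw : mu * W <= gda_dot g (z - zs).
  by have := hm z zs; rewrite hz subr0.
have Hg : gda_sqnorm g <= l ^+ 2 * W.
  by have := nu_lip omega l z zs n0 hl; rewrite hz subr0.
have p0 : 0 < p by rewrite mulr_gt0.
have HU : gda_sqnorm u <= W - 2 * (n%:R * alpha) * mu * W + (n%:R * alpha) ^+ 2 * (l ^+ 2) * W.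
  rewrite /u sqD sqZ dotZr (dotC (z - zs)) -/W -/p.
  have := ler_wpM2l (sqr_ge0 (- p)) Hg; rewrite sqrrN => H1.
  have H2 : - p * gda_dot g (z - zs) <= - p * (mu * W) by have := ler_wpM2l (ltW p0) Hgw; lra.
  idtac.
  lra.
have L0 : 0 < l ^+ 2 by apply: lt_le_trans hmu; exact: exprn_gt0.
have HS := drift_total alpha h z n.
have HG := G_bound alpha l h z zs n hlip.
have HE := e_bound alpha l h z n hlip.
set S := \sum_(i < n) gda_sqnorm (zseq alpha h z i - z) in HS HG HE.
set G := \sum_(j < n) gda_sqnorm (h j (zseq alpha h z j)) in HS HG.
rewrite hsumr -/W in HG.
set Q := \sum_(i < n) gda_sqnorm (omega i zs) in HG.
have HS2 : S <= alpha ^+ 2 * n%:R ^+ 2 / 2 * (2 * Q + 4 * l ^+ 2 * n%:R * W + 4 * l ^+ 2 * S).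
  apply: le_trans HS _; apply: ler_wpM2l => //.
  by rewrite divr_ge0 // mulr_ge0 // sqr_ge0.
have c0 : 0 < n%:R * alpha * mu / 2 by rewrite divr_gt0 // !mulr_gt0.
have HT := sqDc _ u (- (alpha *: e)) c0.
rewrite sqN sqZ in HT.
apply: (@alg_epoch R (n%:R) alpha mu (l ^+ 2) W S Q (gda_sqnorm u) (gda_sqnorm e)) => //.
- by rewrite /W sq_ge0.
- by rewrite /S sumr_ge0 // => i _; exact: sq_ge0.
- by rewrite /Q sumr_ge0 // => i _; exact: sq_ge0.
- exact: sq_ge0.
- exact: sq_ge0.
- by rewrite /gda_sigma2 -/Q mulrA mulfV ?gt_eqF // mul1r.
Qed.

Lemma sq_d0 {R : realType} {d : nat} (u : 'rV[R]_d) : d = 0%N -> gda_sqnorm u = 0.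
Proof.
move=> d0; rewrite /gda_sqnorm /gda_dot big1 // => j _.
by have := ltn_ord j; rewrite {2}d0.
Qed.

Lemma sigma2_ge0 {R : realType} {d n : nat} (omega : 'I_n -> 'rV[R]_d -> 'rV[R]_d) zs :
  0 <= gda_sigma2 omega zs.
Proof.
rewrite /gda_sigma2 mulr_ge0 // ?invr_ge0 ?ler0n // sumr_ge0 // => i _; exact: sq_ge0.
Qed.

Lemma part1 {R : realType} {d n : nat} (omega : 'I_n -> 'rV[R]_d -> 'rV[R]_d)
  (l mu : R) (zstar z0 : 'rV[R]_d) :
  (0 < n)%N -> 0 < mu -> (forall i, gda_lipschitz l (omega i)) ->
  gda_strongly_monotone mu (gda_nu omega) -> gda_nu omega zstar = 0 ->
  forall (alpha : R) (K : nat), 0 < alpha -> alpha <= mu / (5 * n%:R * l ^+ 2) ->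
     (1 <= K)%N ->
     forall taus : nat -> 'S_n,
       gda_sqnorm (gda omega alpha taus K z0 - zstar)
       <= 2 * expR (- (n%:R * alpha * mu * K%:R)) * gda_sqnorm (z0 - zstar)
          + 3 * l ^+ 2 * gda_sigma2 omega zstar * alpha ^+ 3 * n%:R ^+ 3 * K%:R / mu.
Proof.
move=> n0 m0 hl hm hz alpha K a0 hal K1 taus.
have s0 := sigma2_ge0 omega zstar.
case: (posnP d) => [d0|dpos].
  rewrite !(sq_d0 _ d0) mulr0 add0r.
  apply: divr_ge0; last exact: ltW.
  apply: mulr_ge0; last exact: ler0n.
  apply: mulr_ge0; last by rewrite exprn_ge0 ?ler0n.
  apply: mulr_ge0; last by rewrite exprn_ge0 ?ltW.
  apply: mulr_ge0 => //; apply: mulr_ge0 => //; exact: sqr_ge0.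
have hmu := mu_le_l omega l mu dpos n0 m0 hl hm.
have L0 : 0 < l ^+ 2 by apply: lt_le_trans hmu; exact: exprn_gt0.
have nR0 : 0 < (n%:R : R) by rewrite ltr0n.
have c0 : 0 < 5 * n%:R * l ^+ 2 by apply: mulr_gt0 => //; apply: mulr_gt0 => //; lra.
have hal2 : 5 * n%:R * l ^+ 2 * alpha <= mu.
  have H := ler_wpM2l (ltW c0) hal.
  have E : 5 * n%:R * l ^+ 2 * (mu / (5 * n%:R * l ^+ 2)) = mu.
    by rewrite mulrC divfK // gt_eqF.
  by rewrite E in H.
set x := n%:R * alpha * mu.
have hx : x <= 1 / 5.
  have h1 : n%:R * alpha * mu ^+ 2 <= n%:R * alpha * l ^+ 2 by rewrite ler_wpM2l // ltW // mulr_gt0.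
  have : 5 * x * mu <= mu by rewrite /x; nra.
  nra.
have x0 : 0 < x by rewrite /x !mulr_gt0.
set N := 3 * l ^+ 2 * gda_sigma2 omega zstar * alpha ^+ 3 * n%:R ^+ 3 / mu.
have N0 : 0 <= N.
  apply: divr_ge0; last exact: ltW.
  apply: mulr_ge0; last by rewrite exprn_ge0 ?ler0n.
  apply: mulr_ge0; last by rewrite exprn_ge0 ?ltW.
  apply: mulr_ge0 => //; apply: mulr_ge0 => //; exact: sqr_ge0.
set W := gda_sqnorm (z0 - zstar).
have W0 : 0 <= W by exact: sq_ge0.
have rec : forall k, gda_sqnorm (gda omega alpha taus k z0 - zstar) <= (1 - x) ^+ k * W + k%:R * N.
  elim=> [|k IH]; first by rewrite expr0 mul1r mul0r addr0.
  rewrite /=; apply: le_trans (epoch_bound omega l mu alpha zstar (gda omega alpha taus k z0) (taus k) n0 m0 hl hm hz a0 hal2 hmu) _.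
  rewrite -/x -/N exprS -mulrA -natr1.
  have : (1 - x) * gda_sqnorm (gda omega alpha taus k z0 - zstar) <= (1 - x) * ((1 - x) ^+ k * W + k%:R * N).
    by apply: ler_wpM2l => //; lra.
  have : (1 - x) * (k%:R * N) <= k%:R * N.
    have : 0 <= k%:R * N by rewrite mulr_ge0 // ler0n.
    nra.
  lra.
apply: le_trans (rec K) _.
have e1 : 1 - x <= expR (- x) by have := expR_ge1Dx (- x); lra.
have e2 : (1 - x) ^+ K <= expR (- x) ^+ K.
  by apply: lerXn2r => //; rewrite ?nnegrE ?expR_ge0 //; lra.
have -> : - (n%:R * alpha * mu * K%:R) = - x * K%:R by rewrite -/x mulNr.
rewrite expRM_natr.
have e3 : (1 - x) ^+ K * W <= 2 * expR (- x) ^+ K * W.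
  have := ler_wpM2r W0 e2; have : 0 <= expR (- x) ^+ K * W by rewrite mulr_ge0 // exprn_ge0 // expR_ge0.
  nra.
have -> : 3 * l ^+ 2 * gda_sigma2 omega zstar * alpha ^+ 3 * n%:R ^+ 3 * K%:R / mu = K%:R * N.
  by rewrite /N; field; rewrite gt_eqF.
lra.
Qed.

Lemma part2 {R : realType} {d n : nat} (omega : 'I_n -> 'rV[R]_d -> 'rV[R]_d)
  (l mu : R) (zstar z0 : 'rV[R]_d) :
  (0 < n)%N -> 0 < mu -> (forall i, gda_lipschitz l (omega i)) ->
  gda_strongly_monotone mu (gda_nu omega) -> gda_nu omega zstar = 0 ->
  (forall K : nat, (1 <= K)%N ->
     1 < gda_norm (gda_nu omega z0) * K%:R / mu ->
     let alpha := Num.min (mu / (5 * n%:R * l ^+ 2))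
                          (2 * ln (gda_norm (gda_nu omega z0) * K%:R / mu) / (mu * n%:R * K%:R)) in
     let kappa := l / mu in
     forall taus : nat -> 'S_n,
       gda_sqnorm (gda omega alpha taus K z0 - zstar)
       <= 2 * expR (- (K%:R / (5 * kappa ^+ 2))) * gda_sqnorm (z0 - zstar)
          + (2 * mu ^+ 2 + 24 * kappa ^+ 2 * gda_sigma2 omega zstar
               * (ln (gda_norm (gda_nu omega z0) * K%:R / mu)) ^+ 3) / (mu ^+ 2 * K%:R ^+ 2)).
Proof.
move=> n0 m0 hl hm hz K K1 hX.
case: (posnP d) => [d0|dpos].
  by move=> alpha kappa taus; move: hX; rewrite /gda_norm (sq_d0 _ d0) sqrtr0 !mul0r; lra.
have hmu := mu_le_l omega l mu dpos n0 m0 hl hm.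
have L0 : 0 < l ^+ 2 by apply: lt_le_trans hmu; exact: exprn_gt0.
have nR0 : 0 < (n%:R : R) by rewrite ltr0n.
have KR0 : 0 < (K%:R : R) by rewrite ltr0n.
have s0 := sigma2_ge0 omega zstar.
set sig := gda_sigma2 omega zstar in s0 *.
set nz := gda_norm (gda_nu omega z0) in hX *.
set X := nz * K%:R / mu in hX *.
set Lg := ln X.
have Lg0 : 0 < Lg by exact: ln_gt0.
have X0 : 0 < X by lra.
set a1 := mu / (5 * n%:R * l ^+ 2).
set a2 := 2 * Lg / (mu * n%:R * K%:R).
move=> alpha kappa taus.
have c0 : 0 < 5 * n%:R * l ^+ 2 by apply: mulr_gt0 => //; apply: mulr_gt0 => //; lra.
have a10 : 0 < a1 by rewrite /a1 divr_gt0.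
have a20 : 0 < a2 by rewrite /a2 divr_gt0 ?mulr_gt0 //; lra.
have al0 : 0 < alpha by rewrite /alpha; case: (lerP a1 a2).
have al1 : alpha <= a1 by rewrite /alpha; case: (lerP a1 a2) => // H; exact: ltW.
have al2 : alpha <= a2 by rewrite /alpha; case: (lerP a1 a2).
have H := part1 omega l mu zstar z0 n0 m0 hl hm hz alpha K al0 al1 K1 taus.
rewrite -/sig in H.
apply: le_trans H _.
set W := gda_sqnorm (z0 - zstar).
have W0 : 0 <= W by exact: sq_ge0.
have Hn : 3 * l ^+ 2 * sig * alpha ^+ 3 * n%:R ^+ 3 * K%:R / mu
          <= 24 * kappa ^+ 2 * sig * Lg ^+ 3 / (mu ^+ 2 * K%:R ^+ 2).
  have e3 : alpha ^+ 3 <= a2 ^+ 3 by apply: lerXn2r => //; rewrite nnegrE ltW.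
  have c1 : 0 <= 3 * l ^+ 2 * sig * n%:R ^+ 3 * K%:R / mu.
    apply: divr_ge0; last exact: ltW.
    apply: mulr_ge0; last exact: ltW.
    apply: mulr_ge0; last by rewrite exprn_ge0 // ltW.
    apply: mulr_ge0 => //; apply: mulr_ge0 => //; exact: ltW.
  have := ler_wpM2l c1 e3.
  have -> : 3 * l ^+ 2 * sig * n%:R ^+ 3 * K%:R / mu * a2 ^+ 3
            = 24 * kappa ^+ 2 * sig * Lg ^+ 3 / (mu ^+ 2 * K%:R ^+ 2).
    rewrite /a2 /kappa; field.
    by rewrite (gt_eqF m0) (gt_eqF nR0) (gt_eqF KR0).
  have -> : 3 * l ^+ 2 * sig * alpha ^+ 3 * n%:R ^+ 3 * K%:R / mu
            = 3 * l ^+ 2 * sig * n%:R ^+ 3 * K%:R / mu * alpha ^+ 3 by ring.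
  done.
have nz0 : 0 < nz.
  have : 0 <= nz by exact: sqrtr_ge0.
  rewrite /X in hX; move=> h0; rewrite lt0r h0 andbT; apply/negP => /eqP h1.
  by move: hX; rewrite h1 !mul0r; lra.
have hW : mu ^+ 2 * W <= nz ^+ 2.
  have := @mono_young _ _ mu _ _ m0 (hm z0 zstar); rewrite hz subr0 -/W.
  by rewrite /nz /gda_norm sqr_sqrtr // sq_ge0.
have He : 2 * expR (- (n%:R * alpha * mu * K%:R)) * W
          <= 2 * expR (- (K%:R / (5 * kappa ^+ 2))) * W + 2 * mu ^+ 2 / (mu ^+ 2 * K%:R ^+ 2).
  have ex0 : 0 <= 2 * expR (- (K%:R / (5 * kappa ^+ 2))) * W.
    by rewrite mulr_ge0 // mulr_ge0 // expR_ge0.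
  have ex1 : 0 <= 2 * mu ^+ 2 / (mu ^+ 2 * K%:R ^+ 2).
    by rewrite divr_ge0 // ?mulr_ge0 // ?sqr_ge0 //; lra.
  move: al1 al2; rewrite /alpha; case: (lerP a1 a2) => Hc _ _.
    have -> : n%:R * a1 * mu * K%:R = K%:R / (5 * kappa ^+ 2).
      rewrite /a1 /kappa; field.
      have l0 : l != 0 by apply/eqP => h0; move: L0; rewrite h0 expr0n /= ltxx.
      by rewrite (gt_eqF m0) (gt_eqF nR0) l0.
    lra.
  have -> : n%:R * a2 * mu * K%:R = Lg * 2%:R.
    rewrite /a2; field.
    by rewrite (gt_eqF m0) (gt_eqF nR0) (gt_eqF KR0).
  rewrite expRN expRM_natr /Lg lnK ?posrE //.
  have -> : 2 * (X ^+ 2)^-1 * W = 2 * (mu ^+ 2 * W) / (nz ^+ 2 * K%:R ^+ 2).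
    rewrite /X; field.
    by rewrite (gt_eqF m0) (gt_eqF nz0) (gt_eqF KR0).
  have -> : 2 * mu ^+ 2 / (mu ^+ 2 * K%:R ^+ 2) = 2 * nz ^+ 2 / (nz ^+ 2 * K%:R ^+ 2).
    field; by rewrite (gt_eqF m0) (gt_eqF nz0) (gt_eqF KR0).
  have d0 : 0 < nz ^+ 2 * K%:R ^+ 2 by rewrite mulr_gt0 // exprn_gt0.
  have : 2 * (mu ^+ 2 * W) / (nz ^+ 2 * K%:R ^+ 2) <= 2 * nz ^+ 2 / (nz ^+ 2 * K%:R ^+ 2).
    by rewrite ler_pM2r ?invr_gt0 //; lra.
  lra.
have -> : (2 * mu ^+ 2 + 24 * kappa ^+ 2 * sig * Lg ^+ 3) / (mu ^+ 2 * K%:R ^+ 2)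
   = 2 * mu ^+ 2 / (mu ^+ 2 * K%:R ^+ 2) + 24 * kappa ^+ 2 * sig * Lg ^+ 3 / (mu ^+ 2 * K%:R ^+ 2).
  by rewrite mulrDl.
lra.
Qed.

Theorem theorem2 (R : realType) (d n : nat) (omega : 'I_n -> 'rV[R]_d -> 'rV[R]_d)
  (l mu : R) (zstar z0 : 'rV[R]_d) :
  (0 < n)%N ->
  0 < mu ->
  (forall i, gda_lipschitz l (omega i)) ->
  gda_strongly_monotone mu (gda_nu omega) ->
  gda_nu omega zstar = 0 ->
  (forall (alpha : R) (K : nat), 0 < alpha -> alpha <= mu / (5 * n%:R * l ^+ 2) ->
     (1 <= K)%N ->
     forall taus : nat -> 'S_n,
       gda_sqnorm (gda omega alpha taus K z0 - zstar)
       <= 2 * expR (- (n%:R * alpha * mu * K%:R)) * gda_sqnorm (z0 - zstar)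
          + 3 * l ^+ 2 * gda_sigma2 omega zstar * alpha ^+ 3 * n%:R ^+ 3 * K%:R / mu)
  /\
  (forall K : nat, (1 <= K)%N ->
     1 < gda_norm (gda_nu omega z0) * K%:R / mu ->
     let alpha := Num.min (mu / (5 * n%:R * l ^+ 2))
                          (2 * ln (gda_norm (gda_nu omega z0) * K%:R / mu) / (mu * n%:R * K%:R)) in
     let kappa := l / mu in
     forall taus : nat -> 'S_n,
       gda_sqnorm (gda omega alpha taus K z0 - zstar)
       <= 2 * expR (- (K%:R / (5 * kappa ^+ 2))) * gda_sqnorm (z0 - zstar)
          + (2 * mu ^+ 2 + 24 * kappa ^+ 2 * gda_sigma2 omega zstar
               * (ln (gda_norm (gda_nu omega z0) * K%:R / mu)) ^+ 3) / (mu ^+ 2 * K%:R ^+ 2)).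
Proof.
Proof.
move=> n0 m0 hl hm hz; split.
- exact: (part1 omega l mu zstar z0 n0 m0 hl hm hz).
- exact: (part2 omega l mu zstar z0 n0 m0 hl hm hz).
Qed.
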